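(* Let $\mathcal S\subset\mathbb R^n$ be a finite positive spanning set of unit vectors and $P=\{x: x^\top d\le 1\ \forall d\in\mathcal S\}$. Consider the randomized algorithm which sets $v=\mathbf 0$ and, at each iteration, samples $c$ uniformly from the unit sphere $\{x\in\mathbb R^n:\|x\|=1\}$ (independently across iterations), computes a vertex solution $\bar v$ of the linear program $\max c^\top x$ subject to $x\in P$, and replaces $v$ by $\bar v$ if $\|\bar v\|>\|v\|$; after $k$ iterations it outputs $1/\|v\|$ and $v/\|v\|$. Then, with probability $1$, when run ad infinitum (i.e., as $k\to\infty$), the algorithm finds a minimizer: almost surely there is an iteration after which $v$ is a maximizer of $\|x\|^2$ over $P$, so that $v/\|v\|$ minimizes $\max_{d\in\mathcal S}d^\top u$ over unit vectors $u$ and $1/\|v\|$ equals the cosine measure of $\mathcal S$.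
   Context: A finite set $\{d_1,\dots,d_k\}\subset\mathbb R^n$ is positive spanning if $\{\sum_i\lambda_id_i:\lambda_i\ge0\}=\mathbb R^n$. The cosine measure of a finite set $\mathcal S\subset\mathbb R^n\setminus\{\mathbf 0\}$ is $\operatorname{cm}(\mathcal S)=\min_{\|u\|=1}\max_{d\in\mathcal S}\frac{d^\top u}{\|d\|}$, and its minimizers are the cosine vectors. For such $\mathcal S$ of unit vectors, maximizers $x^*$ of $\|x\|^2$ over $P$ exist and correspond to cosine vectors $x^*/\|x^*\|$ with $\operatorname{cm}(\mathcal S)=1/\|x^*\|$. *)

(* Defs.v *)
From HB Require Import structures.
From mathcomp Require Import all_boot all_order all_algebra.
From mathcomp Require Import all_classical all_reals all_analysis.
Set Implicit Arguments. Unset Strict Implicit. Unset Printing Implicit Defensive.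
Import Order.TTheory GRing.Theory Num.Theory.
Import numFieldNormedType.Exports.
Local Open Scope classical_set_scope.
Local Open Scope ring_scope.

Section Geometry.
Context {R : realType} {n : nat}.

Definition dot (x y : 'rV[R]_n) : R := \sum_(i < n) x 0 i * y 0 i.
Definition enorm (x : 'rV[R]_n) : R := Num.sqrt (dot x x).

Definition positive_spanning (S : seq 'rV[R]_n) : Prop :=
  forall x : 'rV[R]_n, exists l : 'I_(size S) -> R,
    (forall i, 0 <= l i) /\ x = \sum_(i < size S) l i *: S`_i.

Definition polar_polytope (S : seq 'rV[R]_n) : set 'rV[R]_n :=
  [set x | forall d, d \in S -> dot x d <= 1].

Definition is_vertex (A : set 'rV[R]_n) (x : 'rV[R]_n) : Prop :=
  A x /\ forall y z (t : R), A y -> A z -> 0 < t < 1 ->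
    x = t *: y + (1 - t) *: z -> y = z.

Definition is_LP_vertex_solution (A : set 'rV[R]_n) (c x : 'rV[R]_n) : Prop :=
  is_vertex A x /\ forall y, A y -> dot c y <= dot c x.

Definition is_norm_sq_maximizer (A : set 'rV[R]_n) (x : 'rV[R]_n) : Prop :=
  A x /\ forall y, A y -> enorm y ^+ 2 <= enorm x ^+ 2.

Definition max_cos (S : seq 'rV[R]_n) (u : 'rV[R]_n) : R :=
  sup [set dot d u / enorm d | d in [set d | d \in S]].

Definition unit_sphere : set 'rV[R]_n := [set x | enorm x = 1].

Definition cosine_measure (S : seq 'rV[R]_n) : R :=
  inf [set max_cos S u | u in unit_sphere].

Definition is_cosine_vector (S : seq 'rV[R]_n) (u : 'rV[R]_n) : Prop :=
  unit_sphere u /\ forall w, unit_sphere w -> max_cos S u <= max_cos S w.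

Fixpoint best_iterate (vbar : nat -> 'rV[R]_n) (k : nat) : 'rV[R]_n :=
  match k with
  | O => 0
  | k'.+1 => let v := best_iterate vbar k' in
             if enorm v < enorm (vbar k') then vbar k' else v
  end.

Definition orthogonal_mx (Q : 'M[R]_n) : Prop := Q *m Q^T = 1%:M.

Definition borel_rV : set_system 'rV[R]_n := <<s @open 'rV[R]_n >>.

End Geometry.

Section Probability.
Context {R : realType} {n : nat} {d : measure_display} {T : measurableType d}.

Definition random_vector (X : T -> 'rV[R]_n) : Prop :=
  forall A, borel_rV A -> measurable (X @^-1` A).

(** X is uniformly distributed on the unit sphere: its law is concentrated on
    the unit sphere and is invariant under all orthogonal transformations
    (the normalized surface measure is the unique such probability). *)
Definition uniform_on_sphere (Pr : probability T R) (X : T -> 'rV[R]_n) : Prop :=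
  Pr (X @^-1` unit_sphere) = 1%E /\
  forall (Q : 'M[R]_n) (A : set 'rV[R]_n), orthogonal_mx Q -> borel_rV A ->
    Pr (X @^-1` ((fun x => x *m Q) @^-1` A)) = Pr (X @^-1` A).

Definition mutually_independent (Pr : probability T R)
    (X : nat -> T -> 'rV[R]_n) : Prop :=
  forall (I : seq nat) (A : nat -> set 'rV[R]_n), uniq I ->
    (forall i, borel_rV (A i)) ->
    Pr (\bigcap_(i in [set i | i \in I]) (X i @^-1` A i)) =
    (\prod_(i <- I) Pr (X i @^-1` A i))%E.

End Probability.

(* Main.v *)
Require Import Defs.
From HB Require Import structures.
From mathcomp Require Import all_boot all_order all_algebra.
From mathcomp Require Import all_classical all_reals all_analysis.
From mathcomp Require Import ring lra.
Import Order.TTheory GRing.Theory Num.Theory.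
Import numFieldNormedType.Exports.
Local Open Scope classical_set_scope.
Local Open Scope ring_scope.

Set Implicit Arguments. Unset Strict Implicit. Unset Printing Implicit Defensive.


Section DotLemmas.
Context {R : realType} {n : nat}.
Implicit Types x y z : 'rV[R]_n.

Lemma dotC x y : dot x y = dot y x.
Proof. by apply: eq_bigr => i _; rewrite mulrC. Qed.
Lemma dotDl x y z : dot (x + y) z = dot x z + dot y z.
Proof. by rewrite /dot -big_split; apply: eq_bigr => i _; rewrite !mxE mulrDl. Qed.
Lemma dotDr x y z : dot z (x + y) = dot z x + dot z y.
Proof. by rewrite dotC dotDl !(dotC z). Qed.
Lemma dotZl a x y : dot (a *: x) y = a * dot x y.
Proof. by rewrite /dot mulr_sumr; apply: eq_bigr => i _; rewrite !mxE mulrA. Qed.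
Lemma dotZr a x y : dot y (a *: x) = a * dot y x.
Proof. by rewrite dotC dotZl dotC. Qed.
Lemma dotNl x y : dot (- x) y = - dot x y.
Proof. by rewrite -scaleN1r dotZl mulN1r. Qed.
Lemma dotNr x y : dot y (- x) = - dot y x.
Proof. by rewrite dotC dotNl dotC. Qed.
Lemma dotBl x y z : dot (x - y) z = dot x z - dot y z.
Proof. by rewrite dotDl dotNl. Qed.
Lemma dotBr x y z : dot z (x - y) = dot z x - dot z y.
Proof. by rewrite dotDr dotNr. Qed.
Lemma dot0l x : dot 0 x = 0.
Proof. by rewrite /dot big1 // => i _; rewrite mxE mul0r. Qed.
Lemma dot0r x : dot x 0 = 0.
Proof. by rewrite dotC dot0l. Qed.
Lemma dot_ge0 x : 0 <= dot x x.
Proof. by apply: sumr_ge0 => i _; rewrite -expr2 sqr_ge0. Qed.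
Lemma dot_sumr I (s : seq I) (F : I -> 'rV[R]_n) x :
  dot x (\sum_(i <- s) F i) = \sum_(i <- s) dot x (F i).
Proof.
elim: s => [|a s IH]; first by rewrite !big_nil dot0r.
by rewrite !big_cons dotDr IH.
Qed.
Lemma dot_mx x y : dot x y = (x *m y^T) 0 0.
Proof. by rewrite !mxE; apply: eq_bigr => i _; rewrite !mxE. Qed.
Lemma enorm_sq x : enorm x ^+ 2 = dot x x.
Proof. by rewrite /enorm sqr_sqrtr // dot_ge0. Qed.
Lemma enorm_ge0 x : 0 <= enorm x.
Proof. exact: sqrtr_ge0. Qed.
Lemma dot_coord x i : (x 0 i) ^+ 2 <= dot x x.
Proof.
rewrite /dot (bigD1 i) //= -expr2 lerDl; apply: sumr_ge0 => j _.
by rewrite -expr2 sqr_ge0.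
Qed.
Lemma two_dot_le x y : 2 * dot x y <= dot x x + dot y y.
Proof.
have := dot_ge0 (x - y); rewrite !dotBl !dotBr (dotC y x).
by rewrite subr_ge0 => h; lra.
Qed.
Lemma two_dot_le_eta x y (e : R) : 2 * e * dot x y <= dot x x + e ^+ 2 * dot y y.
Proof.
have := dot_ge0 (x - e *: y); rewrite !dotBl !dotBr !dotZl !dotZr (dotC y x).
move=> h; nra.
Qed.
End DotLemmas.


Section Topo.
Context {R : realType} {n : nat}.
Implicit Types x y z : 'rV[R]_n.

Lemma cont_sum I (s : seq I) (F : I -> 'rV[R]_n -> R) :
  (forall i, continuous (F i)) -> continuous (fun x => \sum_(i <- s) F i x).
Proof.
move=> hF; elim: s => [|a s IH].
  by under eq_fun do rewrite big_nil; exact: cst_continuous.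
under eq_fun do rewrite big_cons.
by move=> x; exact: (continuousD (hF a x) (IH x)).
Qed.

Lemma cont_dot_sub (a b : 'rV[R]_n) :
  continuous (fun x : 'rV[R]_n => dot (x - a) (x - b)).
Proof.
rewrite /dot; under eq_fun do under eq_bigr do rewrite !mxE.
apply: cont_sum => i x.
have h1 : {for x, continuous (fun y : 'rV[R]_n => y 0 i - a 0 i)}.
  exact: (continuousB (@coord_continuous R 1 n 0 i x) (@cst_continuous _ R (a 0 i) x)).
have h2 : {for x, continuous (fun y : 'rV[R]_n => y 0 i - b 0 i)}.
  exact: (continuousB (@coord_continuous R 1 n 0 i x) (@cst_continuous _ R (b 0 i) x)).
exact: (continuousM h1 h2).
Qed.

Lemma cont_dotr (d : 'rV[R]_n) : continuous (fun x : 'rV[R]_n => dot x d).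
Proof.
rewrite /dot; apply: cont_sum => i x.
exact: (continuousM (@coord_continuous R 1 n 0 i x) (@cst_continuous _ R (d 0 i) x)).
Qed.

Lemma open_ball_dot (p : 'rV[R]_n) (e : R) :
  open [set x : 'rV[R]_n | dot (x - p) (x - p) < e].
Proof.
have -> : [set x : 'rV[R]_n | dot (x - p) (x - p) < e] =
  (fun x => dot (x - p) (x - p)) @^-1` [set r | r < e] by [].
by apply: open_comp; [move=> x _; exact: cont_dot_sub | exact: open_lt].
Qed.

Lemma sphere_eq : (unit_sphere : set 'rV[R]_n) = [set x | dot x x = 1].
Proof.
apply/seteqP; split => x /=; rewrite /unit_sphere /enorm /=.
  by move=> h; rewrite -(sqr_sqrtr (dot_ge0 x)) h expr1n.
by move=> ->; rewrite sqrtr1.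
Qed.

Lemma closed_sphere : closed (unit_sphere : set 'rV[R]_n).
Proof.
rewrite sphere_eq.
have -> : [set x : 'rV[R]_n | dot x x = 1] =
  (fun x => dot (x - 0) (x - 0)) @^-1` [set r | r = 1].
  by apply/seteqP; split => x /=; rewrite subr0.
have hc : closed [set r : R | r = 1] by exact: closed_eq.
exact: (preimage_closed (fun x _ => @cont_dot_sub 0 0 x) hc).
Qed.

Lemma closed_polar (S : seq 'rV[R]_n) : closed (polar_polytope S).
Proof.
have -> : polar_polytope S =
  \bigcap_(d in [set d | d \in S]) ((fun x => dot x d) @^-1` [set r | r <= 1]).
  by apply/seteqP; split => x /= h d /h.
have hc : forall d, [set d | d \in S] d ->
    closed ((fun x => dot x d) @^-1` [set r : R | r <= 1]).
  move=> d _; apply: preimage_closed; last exact: closed_le.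
  by move=> x _; exact: cont_dotr.
exact: (closed_bigI hc).
Qed.

Lemma compact_sphere : compact (unit_sphere : set 'rV[R]_n).
Proof.
have Bco : compact [ set v : 'rV[R]_n | forall i, (fun _ => `[(-1:R), 1]%classic) i (v ord0 i)].
  exact: (rV_compact (fun i => @segment_compact R (-1) 1)).
have sub : unit_sphere `<=` [ set v : 'rV[R]_n | forall i, (fun _ => `[(-1:R), 1]%classic) i (v ord0 i)].
  move=> x /=; rewrite sphere_eq /= => h i.
have := dot_coord x i; rewrite h in_itv /= => hi.
  by apply/andP; split; nra.
exact: (subclosed_compact closed_sphere Bco sub).
Qed.

End Topo.


Section Poly.
Context {R : realType} {n : nat} (S : seq 'rV[R]_n).
Hypothesis Sunit : forall s, s \in S -> enorm s = 1.
Hypothesis Sspan : positive_spanning S.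
Local Notation P := (polar_polytope S).

Lemma polar_dot_bound (t : 'rV[R]_n) : exists B, forall x, P x -> dot x t <= B.
Proof.
have [l [l0 ->]] := Sspan t.
exists (\sum_(i < size S) l i) => x Px.
rewrite dot_sumr; apply: ler_sum => i _; rewrite dotZr.
have := Px _ (mem_nth 0 (ltn_ord i)) => h.
by rewrite -[X in _ <= X]mulr1; apply: ler_wpM2l.
Qed.

Definition ev (i : 'I_n) : 'rV[R]_n := \row_j (j == i)%:R.

Lemma dot_ev x i : dot x (ev i) = x 0 i.
Proof.
rewrite /dot (bigD1 i) //= big1 ?addr0; first by rewrite mxE eqxx mulr1.
by move=> j /negbTE ji; rewrite mxE ji mulr0.
Qed.

Lemma compact_polar : compact P.
Proof.
have hb : forall i : 'I_n, exists B : R * R, forall x, P x -> B.1 <= x 0 i <= B.2.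
  move=> i; have [B1 h1] := polar_dot_bound (ev i).
  have [B2 h2] := polar_dot_bound (- ev i).
  exists (- B2, B1) => x Px /=; have := h1 _ Px; have := h2 _ Px.
  by rewrite dotNr !dot_ev => a b; apply/andP; split; lra.
pose B i := projT1 (cid (hb i)).
have Bco : compact [ set v : 'rV[R]_n | forall i, (fun i => `[(B i).1, (B i).2]%classic) i (v ord0 i)].
  exact: (rV_compact (fun i => @segment_compact R _ _)).
have sub : P `<=` [ set v : 'rV[R]_n | forall i, (fun i => `[(B i).1, (B i).2]%classic) i (v ord0 i)].
  move=> x Px i /=; rewrite in_itv /=.
  exact: (projT2 (cid (hb i)) x Px).
exact: (subclosed_compact (@closed_polar R n S) Bco sub).
Qed.

Lemma polar0 : P 0.
Proof. by move=> d _; rewrite dot0l. Qed.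

Lemma exists_maximizer : exists xs, P xs /\ forall y, P y -> dot y y <= dot xs xs.
Proof.
have cf : {within P, continuous (fun x : 'rV[R]_n => dot (x - 0) (x - 0))}.
  apply: continuous_subspaceT; exact: cont_dot_sub.
have [c cP hc] := EVT_max_rV (ex_intro _ 0 polar0) compact_polar cf.
exists c; split; first by move: cP; rewrite inE.
move=> y Py; have := hc y; rewrite !subr0; apply; by rewrite inE.
Qed.

Lemma ev_polar (i : 'I_n) : P (ev i).
Proof.
move=> d dS; rewrite dotC dot_ev.
have := dot_coord d i; rewrite -enorm_sq Sunit // expr1n => h.
nra.
Qed.

Lemma dot_ev_ev (i : 'I_n) : dot (ev i) (ev i) = 1.
Proof. by rewrite dot_ev mxE eqxx. Qed.

End Poly.


Section Vert.
Context {R : realType} {n : nat} (S : seq 'rV[R]_n).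
Local Notation P := (polar_polytope S).

Definition act (y : 'rV[R]_n) : {set 'I_(size S)} := [set i : 'I_(size S) | dot y S`_i == 1].

Lemma vertex_unique y z : is_vertex P y ->
  (forall i : 'I_(size S), i \in act y -> dot z S`_i = 1) -> z = y.
Proof.
move=> [Py vy] hz.
pose w := z - y.
pose g (i : 'I_(size S)) := `|dot w S`_i| / (1 - dot y S`_i).
have g0 i : 0 <= g i.
  apply: divr_ge0; first exact: normr_ge0.
  by rewrite subr_ge0; apply: Py; exact: mem_nth.
pose K := 1 + \sum_i g i.
have gK i : g i <= K.
  rewrite /K (bigD1 i) //=.
  have s0 : 0 <= \sum_(j | j != i) g j by apply: sumr_ge0.
  lra.
have K0 : 0 < K by rewrite /K ltr_pwDl // sumr_ge0.
pose t := K^-1.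
have t0 : 0 < t by rewrite invr_gt0.
have hP : forall sg : R, `|sg| <= 1 -> P (y + (sg * t) *: w).
  move=> sg hsg d dS.
  have hi : (index d S < size S)%N by rewrite index_mem.
  pose i := Ordinal hi.
  have di : d = S`_i by rewrite /= nth_index.
  rewrite dotDl dotZl.
  have Pyd : dot y d <= 1 by exact: Py.
  have [e1|ne1] := eqVneq (dot y d) 1.
    have : i \in act y by rewrite inE -di e1.
    move/hz; rewrite -di => zd.
    by rewrite /w dotBl zd e1 subrr mulr0 addr0.
  have lt1 : dot y d < 1 by rewrite lt_neqAle ne1 Pyd.
  have := gK i; rewrite /g -di ler_pdivrMr ?subr_gt0 // => h.
  have h2 : `|dot w d| * t <= 1 - dot y d.
    by rewrite /t ler_pdivrMr // mulrC.
  have h3 : sg * t * dot w d <= `|dot w d| * t.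
    have := ler_norm (sg * t * dot w d).
    rewrite !normrM (gtr0_norm t0) => h4.
    apply: (le_trans h4).
    have tw : 0 <= t * `|dot w d| by apply: mulr_ge0; [exact: ltW|exact: normr_ge0].
    by rewrite -mulrA [X in _ <= X]mulrC ler_piMl.
  lra.
have e := vy _ _ (2^-1) (hP 1 ltac:(by rewrite normr1)) (hP (-1) ltac:(by rewrite normrN normr1))
  ltac:(apply/andP; split; [by rewrite invr_gt0 | by rewrite invf_lt1 //; lra]).
have : y = 2^-1 *: (y + (1 * t) *: w) + (1 - 2^-1) *: (y + (-1 * t) *: w).
  by apply/rowP => j; rewrite !mxE; field.
move/e => e2.
have : (2 * t) *: w = 0.
  apply/rowP => j; have := congr1 (fun m : 'rV[R]_n => m 0 j) e2; rewrite !mxE => h.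
  lra.
move/eqP; rewrite scaler_eq0 => /orP [|].
  by rewrite mulf_eq0 pnatr_eq0 /= (gt_eqF t0).
by rewrite /w subr_eq0 => /eqP.
Qed.

Lemma vertex_act_inj y z : is_vertex P y -> P z -> act z = act y -> z = y.
Proof.
move=> vy _ e; apply: vertex_unique => // i; rewrite -e inE => /eqP //.
Qed.

End Vert.


Section Key.
Context {R : realType} {n : nat} (S : seq 'rV[R]_n).
Hypothesis Sunit : forall s, s \in S -> enorm s = 1.
Hypothesis Sspan : positive_spanning S.
Hypothesis n0 : (0 < n)%N.
Local Notation P := (polar_polytope S).

Lemma key_lemma : exists (xs c0 : 'rV[R]_n) (eps : R),
  [/\ P xs, (forall y, P y -> dot y y <= dot xs xs), dot c0 c0 = 1, 0 < eps &
   forall c v, dot (c - c0) (c - c0) < eps -> is_LP_vertex_solution P c v ->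
     dot xs xs <= dot v v].
Proof.
have [xs [Pxs xsmax]] := exists_maximizer Sspan.
set xx := dot xs xs.
have xx1 : 1 <= xx.
  have := xsmax _ (ev_polar Sunit (Ordinal n0)); by rewrite dot_ev_ev.
pose Good (J : {set 'I_(size S)}) :=
  exists y, [/\ is_vertex P y, act S y = J & dot y y < xx].
pose gap J := match pselect (Good J) with
  | left e => xx - dot xs (projT1 (cid e)) | right _ => 1 end.
have gap0 J : 0 < gap J.
  rewrite /gap; case: pselect => [e|_]; last exact: ltr01.
  case: (cid e) => y [_ _ yy] /=.
  have := two_dot_le xs y; rewrite -/xx => h; lra.
pose G := \sum_(J : {set 'I_(size S)}) (gap J)^-1.
have GJ J : (gap J)^-1 <= G.
  rewrite /G (bigD1 J) //=.
  have : 0 <= \sum_(i | i != J) (gap i)^-1.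
    by apply: sumr_ge0 => i _; rewrite invr_ge0 ltW.
  lra.
have G0 : 0 < G.
  have := GJ finset.set0; have : 0 < (gap finset.set0)^-1 by rewrite invr_gt0.
  lra.
pose g := G^-1.
have g0 : 0 < g by rewrite invr_gt0.
have ggap J : g <= gap J.
  by rewrite /g -(invrK (gap J)) lef_pV2 ?posrE ?invr_gt0.
pose N := Num.sqrt xx.
have N0 : 0 < N by rewrite sqrtr_gt0; lra.
have NN : xx = N * N by rewrite -expr2 sqr_sqrtr //; lra.
pose c0 := N^-1 *: xs.
pose eps := g ^+ 2 / (4 * xx ^+ 2).
exists xs, c0, eps; split => //.
- by rewrite /c0 dotZl dotZr -/xx NN; field; rewrite gt_eqF.
- by rewrite /eps; apply: divr_gt0; [exact: exprn_gt0 | nra].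
move=> c v hc [[Pv vv] LP].
rewrite leNgt; apply/negP => vlt.
have Gv : Good (act S v) by exists v.
have gv : g <= xx - dot xs v.
  have := ggap (act S v); rewrite /gap; case: pselect => [e|//].
  case: (cid e) => y [vy ay yy] /=.
  have -> : v = y by apply: (vertex_act_inj vy Pv).
  done.
have LPx := LP _ Pxs.
pose a := c - c0.
pose z := v - xs.
have cz : 0 <= dot c z by rewrite /z dotBr subr_ge0.
have ce : dot c z = dot c0 z + dot a z.
  by rewrite /a dotBl; ring.
have c0z : dot c0 z = N^-1 * (dot xs v - xx).
  by rewrite /c0 /z dotZl dotBr.
have zz : dot z z <= 4 * xx.
  have := two_dot_le v (- xs); rewrite /z !dotBl !dotBr !dotNr !dotNl (dotC xs v).
  have := xsmax _ Pv; rewrite -/xx => h1 h2; lra.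
pose eta := g / (4 * N * xx).
have eta0 : 0 < eta by rewrite /eta divr_gt0 //; nra.
have h1 := two_dot_le_eta a z eta.
have h2 : eta ^+ 2 * dot z z <= eta ^+ 2 * (4 * xx).
  by apply: ler_wpM2l => //; exact: sqr_ge0.
have h3 : eta ^+ 2 * (4 * xx) = eps.
  rewrite /eta /eps NN; field; by rewrite gt_eqF.
have h4 : eta * dot a z < eps by lra.
have h5 : dot a z < g * N^-1.
  have -> : g * N^-1 = eps / eta.
    rewrite /eps /eta NN; field; by rewrite !gt_eqF.
  by rewrite ltr_pdivlMr // mulrC.
have h6 : N^-1 * (dot xs v - xx) <= - (g * N^-1).
  rewrite mulrC -mulNr; apply: ler_wpM2r; first by rewrite invr_ge0 ltW.
  lra.
lra.
Qed.

End Key.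


Section House.
Context {R : realType} {n : nat}.
Implicit Types x y p u : 'rV[R]_n.

Lemma orth_dot (Q : 'M[R]_n) x y : orthogonal_mx Q ->
  dot (x *m Q) (y *m Q) = dot x y.
Proof.
move=> hQ; rewrite !dot_mx trmx_mul mulmxA -(mulmxA x) hQ mulmx1 //.
Qed.

Lemma uuT u : u *m u^T = (dot u u)%:M.
Proof. by rewrite [LHS]mx11_scalar dot_mx. Qed.

Lemma dot_eq0 u : dot u u = 0 -> u = 0.
Proof.
move=> h; apply/rowP => i; rewrite mxE.
have := dot_coord u i; rewrite h => h2.
by apply/eqP; rewrite -sqrf_eq0 eq_le h2 sqr_ge0.
Qed.

Lemma householder p c0 : dot p p = 1 -> dot c0 c0 = 1 ->
  exists Q : 'M[R]_n, orthogonal_mx Q /\ p *m Q = c0.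
Proof.
move=> pp cc.
have [->|pc] := eqVneq p c0.
  by exists 1%:M; split; rewrite ?mulmx1 // /orthogonal_mx trmx1 mulmx1.
pose u := p - c0.
have uu0 : dot u u != 0.
  by apply/eqP => /dot_eq0 /eqP; rewrite subr_eq0 (negbTE pc).
pose b := 2 / dot u u.
pose M := u^T *m u.
pose Q := 1%:M - b *: M.
have MT : M^T = M by rewrite /M trmx_mul trmxK.
have QT : Q^T = Q by rewrite /Q linearB /= linearZ /= trmx1 MT.
have MM : M *m M = dot u u *: M.
  by rewrite /M mulmxA -(mulmxA u^T) uuT mul_mx_scalar -scalemxAl.
exists Q; split.
  rewrite /orthogonal_mx QT /Q mulmxBl mul1mx mulmxBr mulmx1.
  rewrite -scalemxAl -scalemxAr MM scalerA scalerA.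
  have -> : b * b * dot u u = 2 * b.
    by rewrite /b; field.
  apply/matrixP => i j; rewrite !mxE; ring.
have pu : dot u u = 2 * dot p u.
  rewrite /u !dotBl !dotBr pp cc (dotC c0 p); ring.
have pu1 : p *m u^T = (dot p u)%:M by rewrite [LHS]mx11_scalar dot_mx.
rewrite /Q mulmxBr mulmx1 -scalemxAr /M (mulmxA p) pu1 mul_scalar_mx scalerA.
have -> : b * dot p u = 1.
  rewrite /b pu; field; apply/eqP => h; move: uu0; rewrite pu h mulr0 eqxx //.
by rewrite scale1r /u opprB addrC subrK.
Qed.

Lemma ball_transport (Q : 'M[R]_n) p c0 (e : R) : orthogonal_mx Q -> p *m Q = c0 ->
  (fun x => x *m Q) @^-1` [set x | dot (x - c0) (x - c0) < e] =
  [set x | dot (x - p) (x - p) < e].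
Proof.
move=> hQ pQ; apply/seteqP; split => x /=;
  by rewrite -pQ -mulmxBl orth_dot.
Qed.

End House.


Section Prob.
Context {R : realType} {n : nat}.

Lemma borel_open (A : set 'rV[R]_n) : open A -> borel_rV A.
Proof. by move=> oA; apply: sub_gen_smallest. Qed.

Lemma borelC (A : set 'rV[R]_n) : borel_rV A -> borel_rV (~` A).
Proof. exact: sigma_algebraC. Qed.

Lemma borel_closed (A : set 'rV[R]_n) : closed A -> borel_rV A.
Proof.
move=> cA; rewrite -(setCK A); apply: borelC; apply: borel_open.
exact: closed_openC.
Qed.

Definition dball (p : 'rV[R]_n) (e : R) := [set x : 'rV[R]_n | dot (x - p) (x - p) < e].

Lemma sphere_cover (e : R) : 0 < e -> exists s : seq 'rV[R]_n,
  (forall p, p \in s -> dot p p = 1) /\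
  unit_sphere `<=` [set x | exists2 p, p \in s & dball p e x].
Proof.
move=> e0.
have := @compact_sphere R n; rewrite compact_cover => /(_ _ unit_sphere (fun p => dball p e)).
case.
- by move=> p _; exact: open_ball_dot.
- move=> x sx; exists x => //; rewrite /dball /= subrr dot0l //.
move=> D' sD' cov; exists (finmap.enum_fset D'); split.
  move=> p pD; have := sD' p pD; by rewrite sphere_eq inE.
move=> x /cov [p pD bx]; exists p => //.
Qed.

End Prob.

Section Prob2.
Context {R : realType} {n : nat} {d : measure_display} {T : measurableType d}.
Variable Pr : probability T R.

Lemma pr_fin (A : set T) : measurable A ->
  Pr A = (fine (Pr A))%:E /\ 0 <= fine (Pr A) <= 1.
Proof.
move=> mA.
have h0 := measure_ge0 Pr A; have h1 := probability_le1 Pr mA.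
have f : Pr A \is a fin_num by rewrite ge0_fin_numE // (le_lt_trans h1) // ltey.
split; first by rewrite fineK.
by apply/andP; split; rewrite -lee_fin fineK.
Qed.

Lemma prob_lb (c0 : 'rV[R]_n) (e : R) (s : seq 'rV[R]_n) (X : T -> 'rV[R]_n) :
  dot c0 c0 = 1 -> 0 < e ->
  (forall p, p \in s -> dot p p = 1) ->
  unit_sphere `<=` [set x | exists2 p, p \in s & dball p e x] ->
  random_vector X -> uniform_on_sphere Pr X ->
  1 <= (size s)%:R * fine (Pr (X @^-1` dball c0 e)).
Proof.
move=> cc e0 sp cov rX [u1 uinv].
have mB p : measurable (X @^-1` dball p e).
  by apply: rX; apply: borel_open; exact: open_ball_dot.
have eqB p : p \in s -> Pr (X @^-1` dball p e) = Pr (X @^-1` dball c0 e).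
  move=> ps; have [Q [oQ pQ]] := householder (sp p ps) cc.
  have bt := ball_transport e oQ pQ.
  rewrite /dball -bt uinv //; apply: borel_open; exact: open_ball_dot.
have mS : measurable (X @^-1` unit_sphere).
  by apply: rX; apply: borel_closed; exact: closed_sphere.
have sub : X @^-1` unit_sphere `<=`
    \big[setU/set0]_(k < size s) (X @^-1` dball s`_k e).
  move=> w /cov [p ps bp]; rewrite -(bigcup_mkord _ (fun k => X @^-1` dball s`_k e)).
  exists (index p s); first by rewrite /= index_mem.
  by rewrite /= nth_index.
have := @content_subadditive _ _ _ Pr (X @^-1` unit_sphere) (fun k => X @^-1` dball s`_k e) (size s) (fun k _ => mB _) mS sub.
move=> h.
have {h}h : (1 <= \sum_(k < size s) Pr (X @^-1` dball s`_k e))%E.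
  by rewrite -u1; exact: h.
move: h.
have -> : (\sum_(k < size s) Pr (X @^-1` dball s`_k e) =
           \sum_(k < size s) (fine (Pr (X @^-1` dball c0 e)))%:E)%E.
  apply: eq_bigr => k _; rewrite eqB ?mem_nth //.
  by rewrite -(pr_fin (mB c0)).1.
rewrite sumEFin sumr_const card_ord lee_fin mulr_natl //.
Qed.

End Prob2.


Section Cos.
Context {R : realType} {n : nat} (S : seq 'rV[R]_n).
Hypothesis Sunit : forall s, s \in S -> enorm s = 1.
Hypothesis Sspan : positive_spanning S.
Hypothesis n0 : (0 < n)%N.
Local Notation P := (polar_polytope S).

Lemma sum_mem_le (s : seq 'rV[R]_n) (f : 'rV[R]_n -> R) x :
  (forall y, 0 <= f y) -> x \in s -> f x <= \sum_(y <- s) f y.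
Proof.
move=> f0 xs; rewrite (big_rem x xs) /= lerDl; exact: sumr_ge0.
Qed.

Definition cosset (w : 'rV[R]_n) :=
  [set dot d w / enorm d | d in [set d | d \in S]].

Lemma cosset_E w r : cosset w r <-> exists2 d, d \in S & r = dot d w.
Proof.
split.
  by move=> [d /= dS <-]; exists d => //; rewrite Sunit // divr1.
by move=> [d dS ->]; exists d => //; rewrite Sunit // divr1.
Qed.

Lemma cosset_ub w : has_ubound (cosset w).
Proof.
exists (\sum_(d <- S) `|dot d w|) => r /cosset_E [d dS ->].
apply: le_trans (ler_norm _) _.
by rewrite (big_rem d dS) /= lerDl sumr_ge0.
Qed.

Lemma pos_dir w : dot w w = 1 -> exists2 d, d \in S & 0 < dot d w.
Proof.
move=> ww; have [l [l0 wl]] := Sspan w.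
case: (pselect (exists2 d, d \in S & 0 < dot d w)) => // hn; exfalso.
have : dot w w <= 0.
  rewrite {1}wl dotC dot_sumr; apply: sumr_le0 => i _.
  rewrite dotZr; apply: mulr_ge0_le0 => //.
  rewrite leNgt dotC; apply/negP => hh; apply: hn; exists S`_i => //.
  exact: mem_nth.
by rewrite ww; lra.
Qed.

Lemma cosine_part v : P v -> (forall y, P y -> dot y y <= dot v v) ->
  [/\ is_norm_sq_maximizer P v, is_cosine_vector S ((enorm v)^-1 *: v) &
      (enorm v)^-1 = cosine_measure S].
Proof.
move=> Pv vmax.
have vv1 : 1 <= dot v v.
  have := vmax _ (ev_polar Sunit (Ordinal n0)); by rewrite dot_ev_ev.
set Nv := enorm v.
have NN : dot v v = Nv ^+ 2 by rewrite enorm_sq.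
have N0 : 0 < Nv by rewrite /Nv /enorm sqrtr_gt0; lra.
set u := Nv^-1 *: v.
have uu : dot u u = 1 by rewrite /u dotZl dotZr NN; field; rewrite gt_eqF.
have su : unit_sphere u by rewrite sphere_eq.
have A : max_cos S u <= Nv^-1.
  have [d dS _] := pos_dir uu.
  apply: ge_sup; first by exists (dot d u / enorm d); exists d.
  move=> r /cosset_E [d' d'S ->].
  rewrite /u dotZr dotC; have := Pv _ d'S => h.
  by rewrite -[X in _ <= X]mulr1; apply: ler_wpM2l => //; rewrite invr_ge0 ltW.
have B : forall w, unit_sphere w -> Nv^-1 <= max_cos S w.
  move=> w; rewrite sphere_eq /= => ww.
  have [d dS dpos] := pos_dir ww.
  set m := max_cos S w.
  have ubm : forall d', d' \in S -> dot d' w <= m.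
    move=> d' d'S; apply: (ub_le_sup (cosset_ub w)).
    by apply/cosset_E; exists d'.
  have m0 : 0 < m by apply: lt_le_trans dpos (ubm _ dS).
  have Px : P (m^-1 *: w).
    move=> d' d'S; rewrite dotZl dotC.
    by rewrite ler_pdivrMl // mulr1; exact: ubm.
  have := vmax _ Px; rewrite dotZl dotZr ww mulr1 NN => h.
  have h2 : m^-1 <= Nv.
    have k0 : 0 < m^-1 by rewrite invr_gt0.
    move: h k0 N0; rewrite expr2; set k := m^-1 => h k0 N0'.
    nra.
  by rewrite -(invrK m) lef_pV2 ?posrE ?invr_gt0.
split.
- split => // y Py; rewrite !enorm_sq; exact: vmax.
- split => // w sw; exact: le_trans A (B w sw).
apply/eqP; rewrite eq_le; apply/andP; split.
  apply: lb_le_inf; first by exists (max_cos S u); exists u.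
  by move=> r [w sw <-]; exact: B.
apply: le_trans A.
apply: ge_inf; last by exists u.
exists (Nv^-1) => r [w sw <-]; exact: B.
Qed.

End Cos.


Lemma decay_bound (R : realType) (p : R) (M : nat) : 0 <= p <= 1 ->
  (1 - p) ^+ M * (1 + M%:R * p) <= 1.
Proof.
move=> /andP [p0 p1]; elim: M => [|M IH]; first by rewrite expr0 mul0r addr0 mulr1.
rewrite exprS -mulrA.
have a0 : 0 <= (1 - p) ^+ M by apply: exprn_ge0; lra.
have : (1 - p) * (1 + M.+1%:R * p) <= 1 + M%:R * p.
  rewrite -addn1 natrD; have : 0 <= M%:R :> R by exact: ler0n.
  nra.
move=> h; apply: (le_trans _ IH); rewrite mulrCA; exact: ler_wpM2l.
Qed.

Lemma decay (R : realType) (x p : R) : 0 < p <= 1 -> 0 <= x ->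
  (forall M : nat, x <= (1 - p) ^+ M) -> x = 0.
Proof.
move=> /andP [p0 p1] x0 hx.
have [->//|xne] := eqVneq x 0.
have xp : 0 < x by rewrite lt_neqAle eq_sym xne x0.
pose M := (Num.truncn ((x * p)^-1)).+1.
have hM : (x * p)^-1 < M%:R by exact: truncnS_gt.
have := decay_bound M (ltac:(apply/andP; split; [exact: ltW | exact: p1]) : 0 <= p <= 1).
have := hx M.
have xp0 : 0 < x * p by exact: mulr_gt0.
have e : (x * p) * (x * p)^-1 = 1 by rewrite mulfV // gt_eqF.
move: hM; rewrite -(ltr_pM2l xp0) e => hM h1 h2.
have a0 : 0 <= (1 - p) ^+ M by apply: exprn_ge0; lra.
have : x * (1 + M%:R * p) <= 1.
  apply: le_trans h2; apply: ler_wpM2r => //.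
  have : 0 <= M%:R :> R by exact: ler0n.
  nra.
nra.
Qed.

Section Best.
Context {R : realType} {n : nat} (S : seq 'rV[R]_n).
Local Notation P := (polar_polytope S).

Lemma enorm_lt_dot (a b : 'rV[R]_n) : (enorm a < enorm b) = (dot a a < dot b b).
Proof. by rewrite /enorm !ltNge ler_psqrt // nnegrE dot_ge0. Qed.

Lemma best_prop (vb : nat -> 'rV[R]_n) : (forall k, P (vb k)) ->
  forall j, P (best_iterate vb j) /\
    forall i, (i < j)%N -> dot (vb i) (vb i) <= dot (best_iterate vb j) (best_iterate vb j).
Proof.
move=> hP; elim => [|j [Pj IH]]; first by split => //; exact: polar0.
rewrite /=; case: ifP => h.
  split => // i; rewrite ltnS leq_eqVlt => /orP [/eqP -> //|/IH].
  move=> h2; apply: (le_trans h2); apply: ltW; by rewrite -enorm_lt_dot.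
split => // i; rewrite ltnS leq_eqVlt => /orP [/eqP ->|/IH //].
by move: h; rewrite enorm_lt_dot => /negbT; rewrite -leNgt.
Qed.
End Best.


Lemma ae_of_null (R : realType) (d : measure_display) (T : measurableType d) (Pr : probability T R)
  (Q : T -> Prop) (N : set T) : measurable N -> Pr N = 0%E -> (forall w, ~ N w -> Q w) -> {ae Pr, forall w, Q w}.
Proof.
move=> mN PN h; exists N; split => // w /= nQ.
by apply: contrapT => nN; apply: nQ; apply: h.
Qed.

Lemma prod_le_pow (R : realType) (s : seq nat) (f : nat -> R) (r : R) :
  (forall i, 0 <= f i <= r) -> \prod_(i <- s) f i <= r ^+ size s.
Proof.
move=> hf; elim: s => [|a s IH]; first by rewrite big_nil expr0.
rewrite big_cons exprS /=; have /andP [h0 h1] := hf a.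
apply: (ler_pM h0 _ h1 IH).
by apply: prodr_ge0 => i _; case/andP: (hf i).
Qed.

Unset Implicit Arguments. Set Strict Implicit.

Theorem theorem9 (R : realType) (n : nat) (S : seq 'rV[R]_n)
    (d : measure_display) (T : measurableType d) (Pr : probability T R)
    (c : nat -> T -> 'rV[R]_n) (vbar : nat -> T -> 'rV[R]_n) :
  (forall s, s \in S -> enorm s = 1) ->
  positive_spanning S ->
  (forall k, random_vector (c k)) ->
  (forall k, uniform_on_sphere Pr (c k)) ->
  mutually_independent Pr c ->
  (forall k w, is_LP_vertex_solution (polar_polytope S) (c k w) (vbar k w)) ->
  {ae Pr, forall w, exists K : nat, forall k : nat, (K <= k)%N ->
     let v := best_iterate (vbar ^~ w) k in
     [/\ is_norm_sq_maximizer (polar_polytope S) v,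
         is_cosine_vector S ((enorm v)^-1 *: v) &
         (enorm v)^-1 = cosine_measure S]}.
Proof.
move=> Sunit Sspan rc uc indep LPh.
have [n0|npos] := posnP n.
  exfalso; subst n.
  have [u1 _] := uc 0%N.
  have e : (unit_sphere : set 'rV[R]_0) = set0.
    rewrite sphere_eq; apply/seteqP; split => x //=; rewrite /dot big_ord0.
    by move=> h; move: (@ltr01 R); rewrite h ltxx.
  move: u1; rewrite e preimage_set0 measure0 => /(congr1 fine) /= /eqP.
  by rewrite eq_sym oner_eq0.
have [xs [c0 [eps [Pxs xsmax cc eps0 LPkey]]]] := key_lemma Sunit Sspan npos.
have [s [sp cov]] := @sphere_cover R n eps eps0.
pose U := dball c0 eps.
have oU : borel_rV (~` U) by apply: borelC; apply: borel_open; exact: open_ball_dot.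
have mU k : measurable (c k @^-1` U).
  by apply: rc; apply: borel_open; exact: open_ball_dot.
have mUc k : measurable (c k @^-1` ~` U) by apply: rc.
have lb k := prob_lb cc eps0 sp cov (rc k) (uc k).
have m0 : (0 < size s)%N.
  rewrite lt0n; apply/negP => /eqP h; have := lb 0%N; rewrite h mul0r; lra.
pose p := ((size s)%:R : R)^-1.
have mpos : 0 < (size s)%:R :> R by rewrite ltr0n.
have p01 : 0 < p <= 1.
  apply/andP; split; first by rewrite invr_gt0.
  by rewrite invf_le1 // ler1n.
have qk k : p <= fine (Pr (c k @^-1` U)).
  by rewrite /p -(ler_pM2l mpos) mulfV ?gt_eqF //; exact: lb k.
have pc k : 0 <= fine (Pr (c k @^-1` ~` U)) <= 1 - p.
  have [e1 b1] := pr_fin Pr (mU k).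
  have [e2 b2] := pr_fin Pr (mUc k).
  apply/andP; split; first by case/andP: b2.
  have : Pr (c k @^-1` ~` U) = (1 - fine (Pr (c k @^-1` U)))%:E.
    by rewrite -preimage_setC probability_setC // e1 EFinB.
  move=> ->; have := qk k; rewrite /=; lra.
pose N := \bigcap_k (c k @^-1` ~` U).
have mN : measurable N by apply: bigcapT_measurable.
have bound M : fine (Pr N) <= (1 - p) ^+ M.
  have mI : measurable (\bigcap_(i in [set i | i \in iota 0 M]) (c i @^-1` ~` U)).
    by apply: bigcap_measurableType.
  have sub : N `<=` \bigcap_(i in [set i | i \in iota 0 M]) (c i @^-1` ~` U).
    by move=> w Nw i _; exact: Nw.
  have h1 := le_measure Pr (mem_set mN) (mem_set mI) sub.
  have e := indep (iota 0 M) (fun=> ~` U) (iota_uniq 0 M) (fun=> oU).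
  have {h1}h1 : (Pr N <= \prod_(i <- iota 0 M) Pr (c i @^-1` ~` U))%E.
    exact: (eq_ind _ (fun t => (Pr N <= t)%E) h1 _ e).
  have e2 : (\prod_(i <- iota 0 M) Pr (c i @^-1` ~` U) =
             \prod_(i <- iota 0 M) (fine (Pr (c i @^-1` ~` U)))%:E)%E.
    by apply: eq_bigr => i _; rewrite -(pr_fin Pr (mUc i)).1.
  rewrite e2 prodEFin (pr_fin Pr mN).1 lee_fin in h1.
  apply: (le_trans h1).
  by have := @prod_le_pow R (iota 0 M) _ _ pc; rewrite size_iota.
have PN : Pr N = 0%E.
  rewrite (pr_fin Pr mN).1 (decay p01 _ bound) //.
  by case/andP: (pr_fin Pr mN).2.
refine (@ae_of_null _ _ _ Pr _ N mN PN _) => w nN.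
have [k Uk] : exists k, U (c k w).
  apply: contrapT => hk; apply: nN => k _ /= Uk; apply: hk; exists k; exact: Uk.
have hv := LPkey _ _ Uk (LPh k w).
exists k.+1 => j hj.
have [Pj hj2] := best_prop (fun k => (LPh k w).1.1) j.
apply: (cosine_part Sunit Sspan npos Pj) => y Py.
exact: (le_trans (xsmax y Py) (le_trans hv (hj2 k hj))).
Qed.
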